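(* Let $G$ be a $6$-regular graph, $\mathcal S$ a canonical path partition of $G$, and $P$ a path component with end-vertices $o_1,o_2$. Let $x_1,x_2\in V_2$ be path neighbors on $P$, with $x_1$ immediately preceding $x_2$ when $P$ is traversed from $o_1$ to $o_2$, and suppose neither $x_1$ nor $x_2$ is joined by a free edge to a dangerous vertex. If $b(\{x_1\})+b(\{x_2\})>\frac73$, then $x_1$ goes to $o_1$ and $x_2$ goes to $o_2$.
   Context: All graphs are finite, simple and undirected. A path partition of $G=(V,E)$ is a set of vertex-disjoint paths (single vertices allowed) covering $V$; its members are components. A component with $t\ge3$ vertices is a cycle component if the subgraph induced on its vertex set has a spanning cycle; a one-vertex component is an isolated vertex; every other component is a path component. A path partition is canonical if (1) it has the minimum number of components among all path partitions of $G$; (2) among those, it has the maximum number of cycle components; (3) it has no isolated vertices. Given a canonical path partition $\mathcal S$ of $G$: two vertices are path neighbors if they are consecutive on a path component. An edge of $G$ is a free edge unless it joins two path neighbors or has both endpoints in the same cycle component. $V_1$ is the set of end-vertices of path components together with all vertices of cycle components. The remaining vertices are classified by the first applicable rule: $V_2$: joined by a free edge to a vertex of $V_1$; $V_3$: both path neighbors lie in $V_2$; $V_4$: exactly one path neighbor lies in $V_2$; $V_5$: all others. A balanced edge is a free edge with one endpoint in $V_1$ and the other in $V_2$; for $x\in V_2$, $y\in V_1$ we say $x$ goes to $y$ if $xy$ is a balanced edge. A vertex of $V_2$ is moderate if it is incident to at least two balanced edges, at least one of whose other endpoints is an end-vertex of a path component; it is heavy if it is incident to at least three balanced edges whose other endpoints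 are end-vertices of path components. A vertex of $V_3$ is dangerous if one of its path neighbors is heavy and the other is moderate. For $Y\subseteq V_2$, $b(Y)$ is the sum, over all balanced edges $xy$ with $x\in Y$ and $y\in V_1$, of $2/3$ if $y$ is an end-vertex of a path component, $1/|V(C)|$ if $y$ lies in a cycle component $C$ with $|V(C)|\le 6$, and $0$ if $y$ lies in a cycle component with at least $7$ vertices. *)

(* Defs.v *)
From HB Require Import structures.
From mathcomp Require Import all_boot all_order all_algebra.
Set Implicit Arguments. Unset Strict Implicit. Unset Printing Implicit Defensive.
Import Order.TTheory GRing.Theory Num.Theory.

(* A simple graph on a finite vertex type T is a symmetric irreflexive
   relation e : rel T. *)

Section PathPartitions.
Variables (T : finType) (e : rel T).

Definition gpath (p : seq T) : bool :=
  if p is x :: q then path e x q else false.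

Definition path_partition (S : seq (seq T)) : Prop :=
  [/\ all gpath S, uniq (flatten S) & forall v : T, v \in flatten S].

(* t >= 3 vertices and the induced subgraph has a spanning cycle, i.e.
   some cyclic ordering of the vertex set of p is an e-cycle. *)
Definition is_cycle_comp (p : seq T) : bool :=
  (3 <= size p) && has (cycle e) (permutations p).

Definition is_isolated_comp (p : seq T) : bool := size p == 1.

Definition is_path_comp (p : seq T) : bool :=
  (2 <= size p) && ~~ is_cycle_comp p.

Definition ncycles (S : seq (seq T)) : nat := count is_cycle_comp S.

Definition canonical_pp (S : seq (seq T)) : Prop :=
  [/\ path_partition S,
      (forall S', path_partition S' -> size S <= size S'),
      (forall S', path_partition S' -> size S' = size S ->
                  ncycles S' <= ncycles S)
    & all (fun p => ~~ is_isolated_comp p) S].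

Variable S : seq (seq T).

Definition comp_of (v : T) : seq T := nth [::] S (find (fun p => v \in p) S).

Definition path_nb (u v : T) : bool :=
  has (fun p => is_path_comp p &&
         (((u, v) \in zip p (behead p)) || ((v, u) \in zip p (behead p)))) S.

Definition same_cycle (u v : T) : bool :=
  has (fun p => [&& is_cycle_comp p, u \in p & v \in p]) S.

Definition free_edge (u v : T) : bool :=
  [&& e u v, ~~ path_nb u v & ~~ same_cycle u v].

Definition end_vertex (v : T) : bool :=
  has (fun p => is_path_comp p && ((v == head v p) || (v == last v p))) S.

Definition in_cycle (v : T) : bool := has (fun p => is_cycle_comp p && (v \in p)) S.

Definition V1 (v : T) : bool := end_vertex v || in_cycle v.

Definition V2 (v : T) : bool := ~~ V1 v && [exists y, V1 y && free_edge v y].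

Definition V3 (v : T) : bool :=
  [&& ~~ V1 v, ~~ V2 v & [forall y, path_nb v y ==> V2 y]].

Definition goes_to (x y : T) : bool := [&& V2 x, V1 y & free_edge x y].

Definition moderate (x : T) : bool :=
  [&& V2 x, 2 <= #|[set y | goes_to x y]|
          & 1 <= #|[set y | goes_to x y && end_vertex y]| ].

Definition heavy (x : T) : bool :=
  V2 x && (3 <= #|[set y | goes_to x y && end_vertex y]|).

Definition dangerous (v : T) : bool :=
  V3 v && [exists y1, exists y2,
     [&& y1 != y2, path_nb v y1, path_nb v y2, heavy y1 & moderate y2]].

Local Open Scope ring_scope.

Definition bweight (y : T) : rat :=
  if end_vertex y then 2 / 3
  else if (size (comp_of y) <= 6)%N then ((size (comp_of y))%:R)^-1
  else 0.

Definition bval (Y : {set T}) : rat :=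
  \sum_(x in Y) \sum_(y | goes_to x y) bweight y.

End PathPartitions.

(* Main.v *)
Require Import Defs.
From HB Require Import structures.
From mathcomp Require Import all_boot all_order all_algebra.
From mathcomp Require Import ring lra zify.
Import Order.TTheory GRing.Theory Num.Theory.
Set Implicit Arguments. Unset Strict Implicit. Unset Printing Implicit Defensive.


Section Aux.
Variables (T : finType) (e : rel T).
Hypothesis e_sym : symmetric e.

Lemma rev_cons_last (x : T) s : rev (x :: s) = last x s :: rev (belast x s).
Proof. by rewrite lastI rev_rcons. Qed.

Lemma last_rev' (x : T) s : last x (rev s) = head x s.
Proof. by case: s => //= y s; rewrite rev_cons last_rcons. Qed.

Lemma gpath_rev p : gpath e (rev p) = gpath e p.
Proof.
case: p => [//|x s]; rewrite rev_cons_last /= rev_path.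
by apply: eq_path => u v; rewrite e_sym.
Qed.

Lemma gpath_cat p q d : p != [::] -> q != [::] ->
  gpath e (p ++ q) = [&& gpath e p, gpath e q & e (last d p) (head d q)].
Proof.
case: p => // x p; case: q => // y q _ _ /=; rewrite cat_path /=.
by case: (path e x p); case: (e _ y); case: (path e y q).
Qed.

Lemma cyc_perm p q : perm_eq p q -> is_cycle_comp e p = is_cycle_comp e q.
Proof.
suff H : forall p q, perm_eq p q -> is_cycle_comp e p -> is_cycle_comp e q.
  by move=> h; apply/idP/idP; apply: H; rewrite // perm_sym.
move=> {}p {}q h /andP[sz /hasP[t tp ct]]; apply/andP; split.
  by rewrite -(perm_size h).
apply/hasP; exists t => //; rewrite mem_permutations (perm_trans _ h) //.
by rewrite -mem_permutations.
Qed.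

Lemma cyc_of p : 2 < size p -> cycle e p -> is_cycle_comp e p.
Proof.
move=> sz c; apply/andP; split => //; apply/hasP; exists p => //.
by rewrite mem_permutations perm_refl.
Qed.

Lemma uniq_flatten_mem (S : seq (seq T)) p q y : uniq (flatten S) ->
  p \in S -> q \in S -> y \in p -> y \in q -> p = q.
Proof.
elim: S => //= c S IH; rewrite cat_uniq => /and3P[uc dis uS].
have F : forall r, r \in S -> y \in c -> y \in r -> False.
  move=> r rS yc yr; move/negP: dis; apply; apply/hasP; exists y => //.
  by apply/flattenP; exists r.
rewrite !inE => /orP[/eqP->|pS] /orP[/eqP->|qS] yp yq //.
- by case: (F q).
- by case: (F p).
- exact: IH.
Qed.

Lemma uniq_flatten_comp (S : seq (seq T)) p : uniq (flatten S) -> p \in S -> uniq p.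
Proof.
elim: S => //= c S IH; rewrite cat_uniq => /and3P[uc dis uS].
by rewrite inE => /orP[/eqP->|pS] //; apply: IH.
Qed.

Lemma uniq_S (S : seq (seq T)) : uniq (flatten S) -> all (gpath e) S -> uniq S.
Proof.
elim: S => //= c S IH; rewrite cat_uniq => /and3P[uc dis uS] /andP[gc gS].
rewrite IH // andbT; apply/negP => cS.
move: uc gc dis cS; case: c => // y c _ _ dis cS; move/negP: dis; apply.
apply/hasP; exists y; last by rewrite mem_head.
by apply/flattenP; exists (y :: c) => //; rewrite mem_head.
Qed.

Lemma pp_perm S1 S2 : perm_eq S1 S2 -> path_partition e S1 -> path_partition e S2.
Proof.
move=> h [a u c]; split.
- by rewrite -(perm_all _ h).
- by rewrite -(perm_uniq (perm_flatten h)).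
- by move=> v; rewrite -(perm_mem (perm_flatten h)).
Qed.

Lemma exch_pp S0 R N : path_partition e (R ++ S0) -> all (gpath e) N ->
  perm_eq (flatten N) (flatten R) -> path_partition e (N ++ S0).
Proof.
move=> [a u c] hN hp.
have h : perm_eq (flatten (N ++ S0)) (flatten (R ++ S0)).
  by rewrite !flatten_cat perm_cat2r.
split.
- by move: a; rewrite !all_cat hN => /andP[].
- by rewrite (perm_uniq h).
- by move=> v; rewrite (perm_mem h).
Qed.

Lemma exch_size S R N S0 : canonical_pp e S -> perm_eq S (R ++ S0) ->
  all (gpath e) N -> perm_eq (flatten N) (flatten R) -> size R <= size N.
Proof.
case=> pp minS _ _ hS hN hp.
have pp' := pp_perm hS pp.
have := minS _ (exch_pp pp' hN hp).
by rewrite (perm_size hS) !size_cat leq_add2r.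
Qed.

Lemma exch_cyc S R N S0 : canonical_pp e S -> perm_eq S (R ++ S0) ->
  all (gpath e) N -> perm_eq (flatten N) (flatten R) -> size N = size R ->
  count (is_cycle_comp e) N <= count (is_cycle_comp e) R.
Proof.
case=> pp minS cycS _ hS hN hp hsz.
have pp' := pp_perm hS pp.
have := cycS _ (exch_pp pp' hN hp).
rewrite (perm_size hS) !size_cat hsz => /(_ erefl).
by rewrite /ncycles (permP hS) !count_cat leq_add2r.
Qed.

Lemma extract (S R : seq (seq T)) : uniq S -> uniq R -> {subset R <= S} ->
  exists S0, perm_eq S (R ++ S0).
Proof.
move=> uS uR sub; exists (filter (predC (fun x => x \in R)) S).
have h : perm_eq (filter (fun x => x \in R) S) R.
  apply: uniq_perm => //; first exact: filter_uniq.
  by move=> x; rewrite mem_filter; case xR: (x \in R) => //=; rewrite sub.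
rewrite -(perm_filterC (fun x => x \in R) S).
by rewrite perm_cat2r.
Qed.

Lemma zip_mem (L R : seq T) u v :
  (u, v) \in zip (L ++ u :: v :: R) (behead (L ++ u :: v :: R)).
Proof.
elim: L => [|h L IH] /=; first by rewrite mem_head.
move: IH; case: (L ++ u :: v :: R) => [|y X] //= IH.
by rewrite inE IH orbT.
Qed.

Lemma rev_split (L R : seq T) u v :
  rev (L ++ u :: v :: R) = rev R ++ v :: u :: rev L.
Proof. by rewrite rev_cat !rev_cons -!cats1 -!catA. Qed.

End Aux.


Section Comp.
Variables (T : finType) (e : rel T).
Hypothesis e_sym : symmetric e.
Variable S : seq (seq T).
Hypothesis S_can : canonical_pp e S.

Lemma gS : all (gpath e) S.
Proof. by case: S_can => -[]. Qed.

Lemma uflat : uniq (flatten S).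
Proof. by case: S_can => -[]. Qed.

Lemma uS : uniq S.
Proof. exact: uniq_S uflat gS. Qed.

Lemma gpS p : p \in S -> gpath e p.
Proof. by move=> pS; move/allP: gS; apply. Qed.

Lemma compU p q y : p \in S -> q \in S -> y \in p -> y \in q -> p = q.
Proof. exact: uniq_flatten_mem uflat. Qed.

Lemma uniq_comp p : p \in S -> uniq p.
Proof. exact: uniq_flatten_comp uflat. Qed.

Lemma comp_ofE p y : p \in S -> y \in p -> comp_of S y = p.
Proof.
move=> pS yp; rewrite /comp_of.
have hh : has (fun p => y \in p) S by apply/hasP; exists p.
have yq := nth_find [::] hh.
have qS : nth [::] S (find (fun p => y \in p) S) \in S by apply: mem_nth; rewrite -has_find.
 exact: (compU qS pS yq yp).
Qed.

Lemma end_mem p y : p \in S -> is_path_comp e p ->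
  (y == head y p) || (y == last y p) -> y \in p.
Proof.
move=> pS /andP[sz _]; case: p pS sz => // z p _ _ /orP[] /eqP-> /=.
  by rewrite mem_head.
exact: mem_last.
Qed.

Lemma end_cover p y : p \in S -> (y == head y p) || (y == last y p) ->
  exists s, perm_eq (y :: s) p /\ path e y s.
Proof.
move=> pS; have := gpS pS; case: p pS => // z p pS gp /orP[] /eqP /= ->.
  by exists p; split.
exists (rev (belast z p)); split.
  by rewrite -rev_cons_last perm_rev.
by have := gpath_rev e_sym (z :: p); rewrite rev_cons_last /= => ->.
Qed.

Lemma end_cover2 p y z : p \in S -> (y == head y p) || (y == last y p) ->
  (z == head z p) || (z == last z p) -> y != z ->
  exists s, [/\ perm_eq (y :: s) p, path e y s & last y s = z].
Proof.
move=> pS; have := gpS pS; case: p pS => // w p pS gp /=.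
move=> /orP[] /eqP -> /orP[] /eqP -> //; rewrite ?eqxx // => _.
  by exists p; split.
exists (rev (belast w p)); split.
- by rewrite -rev_cons_last perm_rev.
- by have := gpath_rev e_sym (w :: p); rewrite rev_cons_last /= => ->.
- by have := last_rev' w (w :: p); rewrite rev_cons_last /=.
Qed.

Lemma rot_index (t : seq T) y : y \in t ->
  exists s, rot (index y t) t = y :: s.
Proof.
move=> yt; rewrite /rot (drop_nth y); last by rewrite index_mem.
by rewrite nth_index //; eexists.
Qed.

Lemma cyc_cover C y : is_cycle_comp e C -> y \in C ->
  exists s, perm_eq (y :: s) C /\ path e y s.
Proof.
move=> /andP[sz /hasP[t]]; rewrite mem_permutations => pt ct yC.
have yt : y \in t by rewrite (perm_mem pt).
have [s hs] := rot_index yt; exists s; split.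
  by rewrite -hs perm_rot.
by move: ct; rewrite -(rot_cycle (index y t)) hs /= rcons_path => /andP[].
Qed.

Lemma cyc_adj C : is_cycle_comp e C -> C \in S ->
  exists t, [/\ perm_eq t C, uniq t &
    forall d, d \in t -> exists s, [/\ perm_eq (next t d :: s) C,
      path e (next t d) s, last (next t d) s = d & next t d != d]].
Proof.
move=> /andP[sz /hasP[t]]; rewrite mem_permutations => pt ct CS.
have ut : uniq t by rewrite (perm_uniq pt) (uniq_comp CS).
exists t; split => // d dt.
have [s hs] := rot_index dt.
have sz' : 2 < size (d :: s) by rewrite -hs size_rot (perm_size pt).
case: s hs sz' => [|c s] // hs _.
have hn : next t d = c by rewrite -(next_rot (index d t) ut) hs /= eqxx.
rewrite hn; exists (rcons s d); split.
- apply: (perm_trans _ pt); apply: (@perm_trans _ (d :: c :: s)).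
    apply/permP => q; rewrite /= -cats1 count_cat /=; lia.
  by rewrite -hs perm_rot.
- by move: ct; rewrite -(rot_cycle (index d t)) hs /= rcons_path => /andP[].
- by rewrite last_rcons.
- move: ut; rewrite -(rot_uniq (index d t)) hs /= inE => /andP[/norP[h _] _].
  by rewrite eq_sym.
Qed.

Lemma end_not_cyc y : end_vertex e S y -> in_cycle e S y -> False.
Proof.
move=> /hasP[p pS /andP[pp hy]] /hasP[C CS /andP[cc yC]].
have yp := end_mem pS pp hy.
have eq := compU pS CS yp yC; subst C.
by move: pp => /andP[_]; rewrite cc.
Qed.

Local Open Scope ring_scope.

Lemma bw_end y : end_vertex e S y -> bweight e S y = 2 / 3.
Proof. by rewrite /bweight => ->. Qed.

Lemma bw_cyc C y : C \in S -> is_cycle_comp e C -> y \in C ->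
  [/\ 0 <= bweight e S y, bweight e S y <= (size C)%:R^-1 &
      bweight e S y <= 1 / 3].
Proof.
move=> CS cc yC.
have ne : ~~ end_vertex e S y.
  apply/negP => h; apply: (end_not_cyc h); apply/hasP; exists C => //.
  by rewrite cc.
have sz : (3 <= size C)%N by case/andP: cc.
have h3 : (size C)%:R^-1 <= 1 / 3 :> rat.
  rewrite mul1r lef_pV2 ?ler_nat // posrE ltr0n //.
  by apply: leq_trans sz.
rewrite /bweight (negbTE ne) (comp_ofE CS yC).
case: ifP => _; split => //; rewrite ?invr_ge0 ?ler0n //; lra.
Qed.

Lemma bw_V1 y : V1 e S y -> 0 <= bweight e S y <= 2 / 3.
Proof.
case/orP => [h|/hasP[C CS /andP[cc yC]]].
  by rewrite bw_end //; apply/andP; split; lra.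
have [h1 _ h3] := bw_cyc CS cc yC.
by apply/andP; split => //; lra.
Qed.

End Comp.


Lemma head_cat_nn (T : eqType) (p q : seq T) d : p != [::] -> head d (p ++ q) = head d p.
Proof. by case: p. Qed.

Lemma head_rev' (T : eqType) (x : T) s : head x (rev s) = last x s.
Proof. by case: s => //= y s; rewrite lastI rev_rcons. Qed.

Lemma cycle_gpath (T : eqType) (e : rel T) o p :
  cycle e (o :: p) = path e o p && e (last o p) o.
Proof. by rewrite /= rcons_path. Qed.

Lemma deg4 (T : finType) (e : rel T) S x u v : #|[set w | e x w]| = 6 -> u != v ->
  e x u -> e x v -> path_nb e S x u -> path_nb e S x v ->
  #|[set y | goes_to e S x y]| <= 4.
Proof.
move=> d6 uv xu xv pu pv.
have sub : [set y | goes_to e S x y] \subset [set w | e x w] :\: [set u; v].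
  apply/subsetP => y; rewrite !inE => /and3P[_ _ /and3P[xy py _]].
  rewrite xy andbT; apply/negP => /orP[] /eqP ey; subst y.
    by rewrite pu in py.
  by rewrite pv in py.
apply: (leq_trans (subset_leq_card sub)).
rewrite cardsD d6 (setIidPr _) ?cards2 ?uv //.
by apply/subsetP => y; rewrite !inE => /orP[] /eqP->.
Qed.

Section Exch.
Variables (T : finType) (e : rel T).
Hypothesis e_sym : symmetric e.
Hypothesis e_irr : irreflexive e.
Variable S : seq (seq T).
Hypothesis S_can : canonical_pp e S.
Variables (P a b : seq T) (x1 x2 : T).
Hypothesis HP : (P \in S) || (rev P \in S).
Hypothesis HPpath : is_path_comp e P.
Hypothesis HPdef : P = a ++ x1 :: x2 :: b.

Definition P0 := if P \in S then P else rev P.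

Lemma P0S : P0 \in S.
Proof. by rewrite /P0; case: ifP => // h; move: HP; rewrite h. Qed.

Lemma P0perm : perm_eq P0 P.
Proof. by rewrite /P0; case: ifP => _; rewrite ?perm_rev. Qed.

Lemma memP0 y : (y \in P0) = (y \in P).
Proof. exact: (perm_mem P0perm). Qed.

Lemma P0nc : ~~ is_cycle_comp e P0.
Proof. by rewrite (cyc_perm e P0perm); case/andP: HPpath. Qed.

Lemma P0pc : is_path_comp e P0.
Proof. by rewrite /is_path_comp P0nc (perm_size P0perm) andbT; case/andP: HPpath. Qed.

Lemma gP : gpath e P.
Proof.
have := gpS S_can P0S; rewrite /P0; case: ifP => // _.
by rewrite gpath_rev.
Qed.

Lemma uP : uniq P.
Proof. by rewrite -(perm_uniq P0perm); exact: (uniq_comp S_can P0S). Qed.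

Lemma gbasic : [/\ gpath e (a ++ [:: x1]), path e x2 b & e x1 x2].
Proof.
have := gP; rewrite HPdef -cat_rcons -cats1 (gpath_cat _ x1) //; last by case: a.
by rewrite cats1 last_rcons => /and3P[].
Qed.

Lemma pnb L R u v : P = L ++ u :: v :: R -> path_nb e S u v /\ path_nb e S v u.
Proof.
move=> hP.
suff H : path_nb e S u v by split => //; move: H; rewrite /path_nb;
  apply: sub_has => p /andP[-> /=]; rewrite orbC.
apply/hasP; exists P0; first exact: P0S.
rewrite P0pc /= /P0; case: ifP => _; rewrite hP ?zip_mem //.
by rewrite rev_split zip_mem orbT.
Qed.

 

Lemma G1 K1 K2 y z s1 s2 : K1 \in S -> K2 \in S -> K1 != K2 ->
  y \in K1 -> z \in K2 -> y \notin P -> z \notin P ->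
  perm_eq (y :: s1) K1 -> path e y s1 -> perm_eq (z :: s2) K2 -> path e z s2 ->
  e x1 y -> e z x2 -> False.
Proof.
move=> K1S K2S K12 yK zK yP zP h1 p1 h2 p2 ey ez.
have K1P : K1 != P0 by apply/eqP => h; move: yK; rewrite h memP0 (negbTE yP).
have K2P : K2 != P0 by apply/eqP => h; move: zK; rewrite h memP0 (negbTE zP).
have uR : uniq [:: P0; K1; K2] by rewrite /= !inE !negb_or !(eq_sym P0) K1P K2P K12.
have sR : {subset [:: P0; K1; K2] <= S}.
  by move=> q; rewrite !inE => /or3P[] /eqP->; rewrite ?P0S.
have [S0 hS] := extract (uS S_can) uR sR.
have [gA pB e12] := gbasic.
suff : (3 <= 2)%N by [].
apply: (exch_size (N := [:: a ++ x1 :: y :: s1; rev (z :: s2) ++ x2 :: b]) S_can hS); first last.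
  apply/permP => q; rewrite /= !cats0 !count_cat (permP P0perm) -(permP h1) -(permP h2) HPdef.
  rewrite /= !count_cat /= count_rev /=; ring.
rewrite /= andbT; apply/andP; split.
  rewrite -cat_rcons -cats1 (gpath_cat _ x1) //; last by case: a.
  by rewrite gA /= p1 cats1 last_rcons ey.
rewrite (gpath_cat _ x1) //; last by rewrite rev_cons; case: rev.
by rewrite gpath_rev //= p2 pB last_rev' /= ez.
Qed.


Lemma G2 K y s : K \in S -> y \in K -> y \notin P ->
  perm_eq (y :: s) K -> path e y s -> e x1 y -> e (last y s) x2 -> False.
Proof.
move=> KS yK yP h1 p1 ey ez.
have KP : K != P0 by apply/eqP => h; move: yK; rewrite h memP0 (negbTE yP).
have uR : uniq [:: P0; K] by rewrite /= !inE eq_sym KP.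
have sR : {subset [:: P0; K] <= S}.
  by move=> q; rewrite !inE => /orP[] /eqP->; rewrite ?P0S.
have [S0 hS] := extract (uS S_can) uR sR.
have [gA pB e12] := gbasic.
suff : (2 <= 1)%N by [].
apply: (exch_size (N := [:: a ++ x1 :: (y :: s) ++ x2 :: b]) S_can hS); first last.
  apply/permP => q; rewrite /= !cats0 !count_cat (permP P0perm) -(permP h1) HPdef.
  rewrite /= !count_cat /=; ring.
rewrite /= andbT.
rewrite -cat_rcons -cats1 (gpath_cat _ x1) //; last by case: a.
rewrite gA cats1 last_rcons /= ey /=.
have := gpath_cat e y (p := y :: s) (q := x2 :: b) isT isT.
by rewrite /= => ->; rewrite p1 pB ez.
Qed.

Lemma G3 K y s : K \in S -> y \in K -> y \notin P ->
  perm_eq (y :: s) K -> path e y s -> e x1 (last x2 b) -> e x2 y -> False.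
Proof.
move=> KS yK yP h1 p1 eo ey.
have KP : K != P0 by apply/eqP => h; move: yK; rewrite h memP0 (negbTE yP).
have uR : uniq [:: P0; K] by rewrite /= !inE eq_sym KP.
have sR : {subset [:: P0; K] <= S}.
  by move=> q; rewrite !inE => /orP[] /eqP->; rewrite ?P0S.
have [S0 hS] := extract (uS S_can) uR sR.
have [gA pB e12] := gbasic.
suff : (2 <= 1)%N by [].
apply: (exch_size (N := [:: a ++ x1 :: rev (x2 :: b) ++ y :: s]) S_can hS); first last.
  apply/permP => q; rewrite /= !cats0 !count_cat (permP P0perm) -(permP h1) HPdef.
  rewrite /= !count_cat count_rev /=; ring.
have rn : rev (x2 :: b) != [::] by rewrite rev_cons; case: rev.
rewrite /= andbT.
have qn : rev (x2 :: b) ++ y :: s != [::] by case: (rev _).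
rewrite -cat_rcons -cats1 (gpath_cat _ x1) ?qn //; last by case: a.
rewrite gA cats1 last_rcons /= head_cat_nn // head_rev' /= eo /=.
by rewrite (gpath_cat _ x1) // gpath_rev // /= pB p1 last_rev' /= ey.
Qed.

Lemma G4 K z s : K \in S -> ~~ is_cycle_comp e K -> z \in K -> z \notin P ->
  perm_eq (z :: s) K -> path e z s -> (1 < size a)%N -> e x1 (head x1 a) ->
  e z x2 -> False.
Proof.
move=> KS Knc zK zP h1 p1 sa eo ez.
have KP : K != P0 by apply/eqP => h; move: zK; rewrite h memP0 (negbTE zP).
have uR : uniq [:: P0; K] by rewrite /= !inE eq_sym KP.
have sR : {subset [:: P0; K] <= S}.
  by move=> q; rewrite !inE => /orP[] /eqP->; rewrite ?P0S.
have [S0 hS] := extract (uS S_can) uR sR.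
have [gA pB e12] := gbasic.
have rn : rev (z :: s) != [::] by rewrite rev_cons; case: rev.
have gN : all (gpath e) [:: a ++ [:: x1]; rev (z :: s) ++ x2 :: b].
  by rewrite /= andbT gA /= (gpath_cat _ x1) // gpath_rev //= p1 pB last_rev' /= ez.
have pN : perm_eq (flatten [:: a ++ [:: x1]; rev (z :: s) ++ x2 :: b])
                  (flatten [:: P0; K]).
  apply/permP => q; rewrite /= !cats0 !count_cat (permP P0perm) -(permP h1) HPdef.
  rewrite /= !count_cat count_rev /=; ring.
have := exch_cyc S_can hS gN pN erefl.
have cA : is_cycle_comp e (a ++ [:: x1]).
  case: a sa gA eo => [//|o a'] sa gA eo; apply: cyc_of.
    by rewrite size_cat /= addn1 ltnS.
  by move: gA eo; rewrite cat_cons cycle_gpath /= last_cat /= => -> ->.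
by rewrite /= cA (negbTE P0nc) (negbTE Knc).
Qed.

Lemma G5 : a != [::] -> e x1 (last x2 b) -> e x2 (head x1 a) -> False.
Proof.
move=> an eo eo'.
have uR : uniq [:: P0] by [].
have sR : {subset [:: P0] <= S}.
  by move=> q; rewrite !inE => /eqP->; rewrite ?P0S.
have [S0 hS] := extract (uS S_can) uR sR.
have [gA pB e12] := gbasic.
have rn : rev (x2 :: b) != [::] by rewrite rev_cons; case: rev.
have gC : gpath e (a ++ x1 :: rev (x2 :: b)).
  rewrite -cat_rcons -cats1 (gpath_cat _ x1) //; last by case: a.
  by rewrite gA cats1 last_rcons /= gpath_rev //= pB head_rev' /= eo.
have gN : all (gpath e) [:: a ++ x1 :: rev (x2 :: b)] by rewrite /= gC.
have pN : perm_eq (flatten [:: a ++ x1 :: rev (x2 :: b)]) (flatten [:: P0]).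
  apply/permP => q; rewrite /= !cats0 !count_cat (permP P0perm) HPdef.
  rewrite /= !count_cat count_rev /=; ring.
have := exch_cyc S_can hS gN pN erefl.
have cA : is_cycle_comp e (a ++ x1 :: rev (x2 :: b)).
  case: a an gC eo' => [//|o a'] _ gC eo'; apply: cyc_of.
    rewrite size_cat /= size_rev /=; lia.
  by move: gC eo'; rewrite cat_cons cycle_gpath /= last_cat /= last_rev' /= => -> ->.
by rewrite /= cA (negbTE P0nc).
Qed.

Lemma a_size : goes_to e S x1 (head x1 P) -> (1 < size a)%N.
Proof.
case/and3P => _ _ /and3P[ex pn _].
move: HPdef ex pn; case: a => [|o [|o' a']] //= hP.
  by rewrite hP /= e_irr.
rewrite hP /=; have [_ ->] := pnb (L := [::]) (R := x2 :: b) hP.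
by [].
Qed.

Lemma deg_x1 : (forall v, #|[set w | e v w]| = 6) -> a != [::] ->
  (#|[set y | goes_to e S x1 y]| <= 4)%N.
Proof.
move=> reg an.
have [gA _ e12] := gbasic.
have [pv _] := pnb HPdef.
case: a an HPdef gA => [//|o a'] _ hP gA.
have hP' : P = belast o a' ++ last o a' :: x1 :: x2 :: b.
  by rewrite hP (lastI o a') cat_rcons.
have [_ pu] := pnb hP'.
have uv : last o a' != x2.
  have := uP; rewrite hP' cat_uniq => /and3P[_ _] /= /andP[].
  by rewrite !inE !negb_or => /and3P[_ h _] _.
apply: (deg4 (reg x1) uv) => //.
by move: gA; rewrite cat_cons /= cat_path /= => /andP[_]; rewrite andbT e_sym.
Qed.

End Exch.


Section Bounds.
Variables (T : finType) (e : rel T).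
Variable S : seq (seq T).
Hypothesis S_can : canonical_pp e S.
Local Open Scope ring_scope.

Definition BB x := \sum_(y | goes_to e S x y) bweight e S y.

Lemma bvalE x : bval e S [set x] = BB x.
Proof. by rewrite /bval big_set1. Qed.

Lemma sum_ind (Pr Q : pred T) :
  \sum_(y | Pr y) (Q y)%:R = (#|[set y | Pr y && Q y]|)%:R :> rat.
Proof.
rewrite -sum1dep_card natr_sum big_mkcondr /=.
by apply: eq_bigr => y _; case: (Q y).
Qed.

Lemma sum_one (Pr : pred T) :
  \sum_(y | Pr y) (1 : rat) = (#|[set y | Pr y]|)%:R.
Proof. by rewrite -sum1dep_card natr_sum. Qed.

Lemma card_eq1 x o : #|[set y | goes_to e S x y && (y == o)]| = goes_to e S x o.
Proof.
case h: (goes_to e S x o).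
  transitivity #|[set o]|; last by rewrite cards1.
  apply: eq_card => y; rewrite !inE.
  by case: eqP => [->|]; rewrite ?h ?andbF.
apply/eqP; rewrite cards_eq0; apply/eqP/setP => y; rewrite !inE.
by case: eqP => [->|]; rewrite ?h ?andbF.
Qed.

Lemma sum_le x (f : T -> rat) :
  (forall y, goes_to e S x y -> bweight e S y <= f y) ->
  BB x <= \sum_(y | goes_to e S x y) f y.
Proof. by move=> h; apply: ler_sum. Qed.

Lemma gV1 x y : goes_to e S x y -> V1 e S y.
Proof. by case/and3P. Qed.

Lemma Bsingle x z : (forall y, goes_to e S x y -> y = z) -> BB x <= 2 / 3.
Proof.
move=> h.
have H : BB x <= \sum_(y | goes_to e S x y) (2 / 3 * (y == z)%:R).
  apply: sum_le => y hy; have ey := h _ hy; subst y.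
  rewrite eqxx /= mulr1n mulr1.
  by have /andP[_ ?] := bw_V1 S_can (gV1 hy).
apply: (le_trans H); rewrite -mulr_sumr sum_ind card_eq1.
by case: (goes_to e S x z); rewrite /= ?mulr1 ?mulr0 //; lra.
Qed.

Lemma Boc x o : (#|[set y | goes_to e S x y]| <= 4)%N ->
  (forall y, goes_to e S x y -> y = o \/ in_cycle e S y) -> BB x <= 5 / 3.
Proof.
move=> d4 h.
have H : BB x <= \sum_(y | goes_to e S x y) (1 / 3 * (1 + (y == o)%:R)).
  apply: sum_le => y hy; case: (h _ hy) => [ey|/hasP[C CS /andP[cc yC]]].
    subst y; rewrite eqxx /=; have /andP[_ ] := bw_V1 S_can (gV1 hy); lra.
  have [h0 _ h3] := bw_cyc S_can CS cc yC.
  have : 0 <= (y == o)%:R :> rat by rewrite ler0n.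
  lra.
apply: (le_trans H).
rewrite -mulr_sumr big_split /= sum_one sum_ind card_eq1.
have : (#|[set y | goes_to e S x y]|%:R <= 4 :> rat) by rewrite ler_nat.
move: (#|[set y | goes_to e S x y]|%:R) => n hn.
by case: (goes_to e S x o); rewrite /=; lra.
Qed.

Lemma Bpair x x' o o' C : C \in S -> is_cycle_comp e C ->
  (forall y, goes_to e S x y -> y = o \/ y \in C) ->
  (forall y, goes_to e S x' y -> y = o' \/ y \in C) ->
  ~~ (goes_to e S x o && goes_to e S x' o') ->
  (#|[set y | goes_to e S x y && (y \in C)]| +
   #|[set y | goes_to e S x' y && (y \in C)]| <= size C)%N ->
  BB x + BB x' <= 5 / 3.
Proof.
move=> CS cc h h' nb hc.
have sz : (3 <= size C)%N by case/andP: cc.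
have key : forall x0 o0, (forall y, goes_to e S x0 y -> y = o0 \/ y \in C) ->
    BB x0 <= 2 / 3 * (goes_to e S x0 o0)%:R +
       (size C)%:R^-1 * #|[set y | goes_to e S x0 y && (y \in C)]|%:R.
  move=> x0 o0 h0.
  have H : BB x0 <= \sum_(y | goes_to e S x0 y)
      (2 / 3 * (y == o0)%:R + (size C)%:R^-1 * (y \in C)%:R).
    apply: sum_le => y hy.
    have i0 : 0 <= (size C)%:R^-1 * (y \in C)%:R :> rat.
      by rewrite mulr_ge0 ?invr_ge0 ?ler0n.
    case: (h0 _ hy) => [ey|yC].
      subst y; rewrite eqxx /= mulr1n mulr1; have /andP[_] := bw_V1 S_can (gV1 hy); lra.
    have [_ h2 _] := bw_cyc S_can CS cc yC.
    rewrite yC /= mulr1n mulr1; have : 0 <= 2 / 3 * (y == o0)%:R :> rat.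
      by rewrite mulr_ge0 ?ler0n //; lra.
    lra.
  apply: (le_trans H).
  by rewrite big_split /= -!mulr_sumr !sum_ind card_eq1.
have k1 := key _ _ h; have k2 := key _ _ h'.
move: nb hc k1 k2; set n1 := #|_|; set n2 := #|_| => nb hc k1 k2.
have hk : (n1 + n2)%:R * (size C)%:R^-1 <= 1 :> rat.
  rewrite ler_pdivrMr ?mul1r ?ler_nat // ltr0n; by apply: leq_trans sz.
rewrite natrD mulrDl [n1%:R / _]mulrC [n2%:R / _]mulrC in hk.
have hg : (goes_to e S x o)%:R + (goes_to e S x' o')%:R <= 1 :> rat.
  by move: nb; case: (goes_to e S x o); case: (goes_to e S x' o').
have g1 : 0 <= (goes_to e S x o)%:R :> rat by rewrite ler0n.
have g2 : 0 <= (goes_to e S x' o')%:R :> rat by rewrite ler0n.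
lra.
Qed.

End Bounds.


Lemma gedge (T : finType) (e : rel T) S x y : goes_to e S x y -> e x y.
Proof. by case/and3P => _ _ /and3P[]. Qed.

Section Main1.
Variables (T : finType) (e : rel T).
Hypothesis e_sym : symmetric e.
Hypothesis e_irr : irreflexive e.
Hypothesis e_reg : forall v : T, #|[set w | e v w]| = 6.
Variable S : seq (seq T).
Hypothesis S_can : canonical_pp e S.
Variables (P a b : seq T) (x1 x2 : T).
Hypothesis HP : (P \in S) || (rev P \in S).
Hypothesis HPpath : is_path_comp e P.
Hypothesis HPdef : P = a ++ x1 :: x2 :: b.
Hypothesis Ha : a != [::].
Hypothesis Hb : b != [::].
Hypothesis Hx1 : V2 e S x1.
Hypothesis Hx2 : V2 e S x2.

Lemma hd_any d : head d P = head x1 a.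
Proof. by rewrite HPdef; case: a Ha. Qed.

Lemma tl_any d : last d P = last x2 b.
Proof. by rewrite HPdef last_cat. Qed.

Lemma HPr : (rev P \in S) || (rev (rev P) \in S).
Proof. by rewrite revK orbC. Qed.

Lemma HPpathr : is_path_comp e (rev P).
Proof.
have hr : perm_eq (rev P) P by rewrite perm_rev perm_refl.
by rewrite /is_path_comp size_rev (cyc_perm e hr).
Qed.

Lemma HPdefr : rev P = rev b ++ x2 :: x1 :: rev a.
Proof. by rewrite HPdef rev_split. Qed.

Lemma cycP y : in_cycle e S y -> y \notin P.
Proof.
case/hasP => C CS /andP[cc yC]; apply/negP => yP.
rewrite -(memP0 S) in yP.
have eq := compU S_can CS (P0S HP) yC yP; subst C.
by move: (P0nc S HPpath); rewrite cc.
Qed.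

Lemma tinfo y : (end_vertex e S y && (y \notin P)) || in_cycle e S y ->
  exists K s, [/\ K \in S, y \in K, y \notin P, perm_eq (y :: s) K & path e y s].
Proof.
case/orP => [/andP[/hasP[p pS /andP[pc hy]] yP]|yc].
  have [s [h1 p1]] := end_cover e_sym S_can pS hy.
  by exists p, s; split => //; apply: end_mem pS pc hy.
have yP := cycP yc.
case/hasP: yc => C CS /andP[cc yC].
have [s [h1 p1]] := cyc_cover cc yC.
by exists C, s; split.
Qed.

Lemma cls x y : goes_to e S x y ->
  [\/ y = head x1 P, y = last x1 P, end_vertex e S y && (y \notin P)
    | in_cycle e S y].
Proof.
move/gV1 => /orP[ev|]; last by move=> h; apply: Or44.
case yP: (y \in P); last by apply: Or43; rewrite ev.
case/hasP: ev => p pS /andP[pc hy].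
have yp := end_mem pS pc hy.
have yP0 : y \in P0 S P by rewrite memP0.
have eq := compU S_can pS (P0S HP) yp yP0.
subst p; move: hy; rewrite /P0; case: ifP => _.
  by rewrite hd_any tl_any -(hd_any x1) -(tl_any x1) => /orP[] /eqP ->;
    [apply: Or41 | apply: Or42].
rewrite head_rev' last_rev' (tl_any y) (hd_any y) -(hd_any x1) -(tl_any x1).
by case/orP => /eqP ->; [apply: Or42 | apply: Or41].
Qed.

Lemma FB_oo y z : goes_to e S x1 y -> goes_to e S x2 z ->
  end_vertex e S y && (y \notin P) -> end_vertex e S z && (z \notin P) -> y = z.
Proof.
move=> gy gz /andP[/hasP[p pS /andP[pc hy]] yP] /andP[/hasP[q qS /andP[qc hz]] zP].
case: (eqVneq y z) => // yz; exfalso.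
have ey := gedge gy; have ez := gedge gz; rewrite e_sym in ez.
case: (eqVneq p q) => [epq|npq].
  subst q; have [s [h1 p1 l1]] := end_cover2 e_sym S_can pS hy hz yz.
  apply: (G2 e_sym S_can HP HPdef pS (end_mem pS pc hy) yP h1 p1 ey).
  by rewrite l1.
have [s1 [h1 p1]] := end_cover e_sym S_can pS hy.
have [s2 [h2 p2]] := end_cover e_sym S_can qS hz.
exact: (G1 e_sym S_can HP HPdef pS qS npq (end_mem pS pc hy) (end_mem qS qc hz)
  yP zP h1 p1 h2 p2 ey ez).
Qed.

Lemma FB_oc y z : goes_to e S x1 y -> goes_to e S x2 z ->
  end_vertex e S y && (y \notin P) -> in_cycle e S z -> False.
Proof.
move=> gy gz /andP[/hasP[p pS /andP[pc hy]] yP] zc.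
have zP := cycP zc.
case/hasP: zc => C CS /andP[cc zC].
have ey := gedge gy; have ez := gedge gz; rewrite e_sym in ez.
have npC : p != C by apply/eqP => h; move: pc; rewrite h /is_path_comp cc andbF.
have [s1 [h1 p1]] := end_cover e_sym S_can pS hy.
have [s2 [h2 p2]] := cyc_cover cc zC.
exact: (G1 e_sym S_can HP HPdef pS CS npC (end_mem pS pc hy) zC
  yP zP h1 p1 h2 p2 ey ez).
Qed.

Lemma FB_co y z : goes_to e S x1 y -> goes_to e S x2 z ->
  in_cycle e S y -> end_vertex e S z && (z \notin P) -> False.
Proof.
move=> gy gz yc /andP[/hasP[p pS /andP[pc hz]] zP].
have yP := cycP yc.
case/hasP: yc => C CS /andP[cc yC].
have ey := gedge gy; have ez := gedge gz; rewrite e_sym in ez.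
have npC : C != p by apply/eqP => h; move: pc; rewrite -h /is_path_comp cc andbF.
have [s2 [h2 p2]] := end_cover e_sym S_can pS hz.
have [s1 [h1 p1]] := cyc_cover cc yC.
exact: (G1 e_sym S_can HP HPdef CS pS npC yC (end_mem pS pc hz)
  yP zP h1 p1 h2 p2 ey ez).
Qed.

Lemma FB_cc y z C D : goes_to e S x1 y -> goes_to e S x2 z ->
  C \in S -> is_cycle_comp e C -> y \in C ->
  D \in S -> is_cycle_comp e D -> z \in D -> C = D.
Proof.
move=> gy gz CS cc yC DS dc zD.
have yP : y \notin P by apply: cycP; apply/hasP; exists C; rewrite ?cc.
have zP : z \notin P by apply: cycP; apply/hasP; exists D; rewrite ?dc.
case: (eqVneq C D) => // nCD; exfalso.
have ey := gedge gy; have ez := gedge gz; rewrite e_sym in ez.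
have [s1 [h1 p1]] := cyc_cover cc yC.
have [s2 [h2 p2]] := cyc_cover dc zD.
exact: (G1 e_sym S_can HP HPdef CS DS nCD yC zD yP zP h1 p1 h2 p2 ey ez).
Qed.

Lemma FB_1o z : goes_to e S x1 (head x1 P) -> goes_to e S x2 z ->
  end_vertex e S z && (z \notin P) -> False.
Proof.
move=> g1 gz /andP[/hasP[p pS /andP[pc hz]] zP].
have ez := gedge gz; rewrite e_sym in ez.
have [s [h1 p1]] := end_cover e_sym S_can pS hz.
have e1 := gedge g1; rewrite hd_any in e1.
have pnc : ~~ is_cycle_comp e p by case/andP: pc.
exact: (G4 e_sym S_can HP HPpath HPdef pS pnc (end_mem pS pc hz) zP h1 p1
  (a_size e_irr HP HPpath HPdef g1) e1 ez).
Qed.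

Lemma FB_o2 y : goes_to e S x1 y -> end_vertex e S y && (y \notin P) ->
  goes_to e S x2 (last x1 P) -> False.
Proof.
move=> gy /andP[/hasP[p pS /andP[pc hy]] yP] g2.
have ey := gedge gy; rewrite e_sym in ey.
have [s [h1 p1]] := end_cover e_sym S_can pS hy.
have e2 := gedge g2; rewrite tl_any -head_rev' in e2.
have pnc : ~~ is_cycle_comp e p by case/andP: pc.
have yP' : y \notin rev P by rewrite mem_rev.
have sz : (1 < size (rev b))%N.
  apply: (a_size e_irr HPr HPpathr HPdefr).
  by rewrite head_rev' tl_any -(tl_any x1).
exact: (G4 e_sym S_can HPr HPpathr HPdefr pS pnc (end_mem pS pc hy) yP' h1 p1
  sz e2 ey).
Qed.

Lemma FB_2o z : goes_to e S x1 (last x1 P) -> goes_to e S x2 z ->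
  (end_vertex e S z && (z \notin P)) || in_cycle e S z -> False.
Proof.
move=> g1 gz hz.
have [K [s [KS zK zP h1 p1]]] := tinfo hz.
have e1 := gedge g1; rewrite tl_any in e1.
exact: (G3 e_sym S_can HP HPdef KS zK zP h1 p1 e1 (gedge gz)).
Qed.

Lemma FB_o1 y : goes_to e S x1 y ->
  (end_vertex e S y && (y \notin P)) || in_cycle e S y ->
  goes_to e S x2 (head x1 P) -> False.
Proof.
move=> gy hy g2.
have [K [s [KS yK yP h1 p1]]] := tinfo hy.
have e2 := gedge g2; rewrite hd_any -last_rev' in e2.
have yP' : y \notin rev P by rewrite mem_rev.
exact: (G3 e_sym S_can HPr HPdefr KS yK yP' h1 p1 e2 (gedge gy)).
Qed.

Lemma FB_21 : goes_to e S x1 (last x1 P) -> goes_to e S x2 (head x1 P) -> False.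
Proof.
move=> g1 g2.
have e1 := gedge g1; rewrite tl_any in e1.
have e2 := gedge g2; rewrite hd_any in e2.
exact: (G5 e_sym S_can HP HPpath HPdef Ha e1 e2).
Qed.


Lemma V2_ex x : V2 e S x -> exists y, goes_to e S x y.
Proof.
move=> h; case/andP: (h) => _ /existsP[y /andP[v f]].
by exists y; rewrite /goes_to h v f.
Qed.

Lemma card_AB C : C \in S -> is_cycle_comp e C ->
  (#|[set y | goes_to e S x1 y && (y \in C)]| +
   #|[set y | goes_to e S x2 y && (y \in C)]| <= size C)%N.
Proof.
move=> CS cc.
have [t [pt ut H]] := cyc_adj S_can cc CS.
set A := [set y | goes_to e S x1 y && (y \in C)].
set B := [set y | goes_to e S x2 y && (y \in C)].
have inj : injective (next t) := can_inj (prev_next ut).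
have dis : forall y, y \in A -> y \in (next t) @: B -> False.
  move=> y; rewrite inE => /andP[gy yC] /imsetP[d]; rewrite inE => /andP[gd dC] ey.
  subst y.
  have dt : d \in t by rewrite (perm_mem pt).
  have [s [h1 p1 l1 nd]] := H d dt.
  have cC : next t d \in C by rewrite -(perm_mem pt) mem_next.
  have cP : next t d \notin P by apply: cycP; apply/hasP; exists C; rewrite ?cc.
  apply: (G2 e_sym S_can HP HPdef CS cC cP h1 p1 (gedge gy)).
  by rewrite l1 e_sym (gedge gd).
have sub : A :|: next t @: B \subset [set y | y \in C].
  apply/subsetP => y; rewrite !inE => /orP[/andP[_ ->]//|/imsetP[d]].
  by rewrite inE => /andP[_ dC] ->; rewrite -(perm_mem pt) mem_next (perm_mem pt).
have I0 : #|A :&: next t @: B| = 0.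
  apply/eqP; rewrite cards_eq0; apply/eqP/setP => y; rewrite in_set0.
  by apply/negP => /setIP[h1 h2]; exact: dis h1 h2.
have hC : #|[set y | y \in C]| = size C.
  by rewrite cardsE; apply/card_uniqP; exact: (uniq_comp S_can CS).
have := subset_leq_card sub.
by rewrite hC cardsU card_imset // I0 subn0.
Qed.

Local Open Scope ring_scope.

Lemma SubA : (exists y, goes_to e S x1 y && (end_vertex e S y && (y \notin P))) ->
  BB e S x1 + BB e S x2 <= 4 / 3.
Proof.
case=> y0 /andP[g0 o0].
have allz : forall z, goes_to e S x2 z -> z = y0.
  move=> z gz; case: (cls gz) => [ez|ez|oz|cz].
  - by subst z; case: (FB_o1 g0 _ gz); rewrite o0.
  - by subst z; case: (FB_o2 g0 o0 gz).
  - by rewrite (FB_oo g0 gz o0 oz).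
  - by case: (FB_oc g0 gz o0 cz).
have [z0 gz0] := V2_ex Hx2.
have g2 : goes_to e S x2 y0 by rewrite -(allz _ gz0).
have ally : forall y, goes_to e S x1 y -> y = y0.
  move=> y gy; case: (cls gy) => [ey|ey|oy|cy].
  - by subst y; case: (FB_1o gy g2 o0).
  - by subst y; case: (FB_2o gy g2 _); rewrite o0.
  - by rewrite (FB_oo gy g2 oy o0).
  - by case: (FB_co gy g2 cy o0).
have := Bsingle S_can ally; have := Bsingle S_can allz; lra.
Qed.

Lemma SubC1 :
  (forall y, goes_to e S x1 y -> ~~ (end_vertex e S y && (y \notin P))) ->
  (forall z, goes_to e S x2 z -> ~~ (end_vertex e S z && (z \notin P))) ->
  goes_to e S x1 (last x1 P) ->
  ~~ (goes_to e S x1 (head x1 P) && goes_to e S x2 (last x1 P)) ->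
  BB e S x1 + BB e S x2 <= 7 / 3.
Proof.
move=> n1 n2 g12 nb.
have allz : forall z, goes_to e S x2 z -> z = last x1 P.
  move=> z gz; case: (cls gz) => [ez|//|oz|cz].
  - by subst z; case: (FB_21 g12 gz).
  - by move: (n2 _ gz); rewrite oz.
  - by case: (FB_2o g12 gz _); rewrite cz orbT.
have [z0 gz0] := V2_ex Hx2.
have g2 : goes_to e S x2 (last x1 P) by rewrite -(allz _ gz0).
have n11 : ~~ goes_to e S x1 (head x1 P) by move: nb; rewrite g2 andbT.
have ally : forall y, goes_to e S x1 y -> y = last x1 P \/ in_cycle e S y.
  move=> y gy; case: (cls gy) => [ey|ey|oy|cy].
  - by subst y; rewrite gy in n11.
  - by left.
  - by move: (n1 _ gy); rewrite oy.
  - by right.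
have := Boc S_can (deg_x1 e_sym S_can HP HPpath HPdef e_reg Ha) ally.
have := Bsingle S_can allz; lra.
Qed.

Lemma SubC3 :
  (forall y, goes_to e S x1 y -> ~~ (end_vertex e S y && (y \notin P))) ->
  (forall z, goes_to e S x2 z -> ~~ (end_vertex e S z && (z \notin P))) ->
  ~~ goes_to e S x1 (last x1 P) -> ~~ goes_to e S x2 (head x1 P) ->
  ~~ (goes_to e S x1 (head x1 P) && goes_to e S x2 (last x1 P)) ->
  BB e S x1 + BB e S x2 <= 7 / 3.
Proof.
move=> n1 n2 h12 h21 nb.
have c1 : forall y, goes_to e S x1 y -> y = head x1 P \/ in_cycle e S y.
  move=> y gy; case: (cls gy) => [->|ey|oy|cy]; first by left.
  - by subst y; rewrite gy in h12.
  - by move: (n1 _ gy); rewrite oy.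
  - by right.
have c2 : forall z, goes_to e S x2 z -> z = last x1 P \/ in_cycle e S z.
  move=> z gz; case: (cls gz) => [ez|->|oz|cz]; last 2 first.
  - by move: (n2 _ gz); rewrite oz.
  - by right.
  - by subst z; rewrite gz in h21.
  - by left.
have rbn : rev b != [::] by move: Hb; rewrite -!size_eq0 size_rev.
have d2 := deg_x1 e_sym S_can HPr HPpathr HPdefr e_reg rbn.
have d1 := deg_x1 e_sym S_can HP HPpath HPdef e_reg Ha.
case: (pickP (fun y => goes_to e S x1 y && in_cycle e S y)) =>
  [c0 /andP[gc0 cc0]|no1]; last first.
  have a1 : forall y, goes_to e S x1 y -> y = head x1 P.
    move=> y gy; case: (c1 _ gy) => // cy.
    by move: (no1 y); rewrite gy cy.
  have := Bsingle S_can a1; have := Boc S_can d2 c2; lra.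
case: (pickP (fun z => goes_to e S x2 z && in_cycle e S z)) =>
  [d0 /andP[gd0 cd0]|no2]; last first.
  have a2 : forall z, goes_to e S x2 z -> z = last x1 P.
    move=> z gz; case: (c2 _ gz) => // cz.
    by move: (no2 z); rewrite gz cz.
  have := Bsingle S_can a2; have := Boc S_can d1 c1; lra.
case/hasP: (cd0) => D DS /andP[dc dD].
case/hasP: (cc0) => C0 C0S /andP[c0c cC0].
have eD := FB_cc gc0 gd0 C0S c0c cC0 DS dc dD.
have c1' : forall y, goes_to e S x1 y -> y = head x1 P \/ y \in D.
  move=> y gy; case: (c1 _ gy) => [->|/hasP[C CS /andP[cc yC]]]; [by left|right].
  by rewrite -(FB_cc gy gd0 CS cc yC DS dc dD).
have c2' : forall z, goes_to e S x2 z -> z = last x1 P \/ z \in D.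
  move=> z gz; case: (c2 _ gz) => [->|/hasP[C CS /andP[cc zC]]]; [by left|right].
  by rewrite -eD (FB_cc gc0 gz C0S c0c cC0 CS cc zC).
have := Bpair S_can DS dc c1' c2' nb (card_AB DS dc); lra.
Qed.

End Main1.

Unset Implicit Arguments. Set Strict Implicit.

Theorem mainTheorem13 (T : finType) (e : rel T)
  (e_sym : symmetric e) (e_irr : irreflexive e)
  (e_reg : forall v : T, #|[set w | e v w]| = 6%N)
  (S : seq (seq T)) (S_can : canonical_pp e S)
  (P a b : seq T) (o1 o2 x1 x2 : T)
  (HP : (P \in S) || (rev P \in S)) (HPpath : is_path_comp e P)
  (HPdef : P = a ++ x1 :: x2 :: b)
  (Ho1 : o1 = head x1 P) (Ho2 : o2 = last x1 P)
  (Hx1 : V2 e S x1) (Hx2 : V2 e S x2)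
  (Hnd1 : forall d, dangerous e S d -> ~~ free_edge e S x1 d)
  (Hnd2 : forall d, dangerous e S d -> ~~ free_edge e S x2 d)
  (Hb : (7 / 3 < bval e S [set x1] + bval e S [set x2])%R) :
  goes_to e S x1 o1 /\ goes_to e S x2 o2.
Proof.
have hI : forall x y, head x P = head y P /\ last x P = last y P.
  by move=> x y; rewrite HPdef; case: (a) => [|z a']; split.
have ev : forall d, end_vertex e S (head d P) && end_vertex e S (last d P).
  move=> d; apply/andP; split; apply/hasP; exists (P0 S P);
    rewrite ?(P0S HP) // (P0pc S HPpath) /= /P0; case: ifP => _;
    rewrite ?head_rev' ?last_rev';
    rewrite ?(proj1 (hI (head d P) d)) ?(proj2 (hI (last d P) d)) ?eqxx ?orbT //.
have Ha : a != [::].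
  apply/eqP => a0; have := ev x1; rewrite HPdef a0 /= => /andP[h _].
  by move: Hx1 => /andP[/negP[]]; rewrite /V1 h.
have Hb' : b != [::].
  apply/eqP => b0; have := ev x1; rewrite HPdef b0 last_cat /= => /andP[_ h].
  by move: Hx2 => /andP[/negP[]]; rewrite /V1 h.
have Ha' : rev b != [::] by move: Hb'; rewrite -!size_eq0 size_rev.
have HPr' := HPr HP.
have HPpathr' := HPpathr HPpath.
have HPdefr' := HPdefr HPdef.
case h: (goes_to e S x1 o1 && goes_to e S x2 o2); first by case/andP: h.
exfalso; move/negbT: h => nb.
suff : (BB e S x1 + BB e S x2 <= 7 / 3)%R by rewrite -!bvalE; lra.
subst o1 o2.
case: (pickP (fun y => goes_to e S x1 y && (end_vertex e S y && (y \notin P))))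
  => [y0 h0|n1].
  have := SubA e_sym e_irr S_can HP HPpath HPdef Ha Hx2 (ex_intro _ y0 h0); lra.
case: (pickP (fun z => goes_to e S x2 z && (end_vertex e S z && (z \notin P))))
  => [z0 h0|n2].
  have h0' : goes_to e S x2 z0 && (end_vertex e S z0 && (z0 \notin rev P)).
    by rewrite mem_rev.
  have := SubA e_sym e_irr S_can HPr' HPpathr' HPdefr' Ha' Hx1 (ex_intro _ z0 h0').
  lra.
have n1' : forall y, goes_to e S x1 y -> ~~ (end_vertex e S y && (y \notin P)).
  by move=> y gy; apply/negP => hh; move: (n1 y); rewrite /= gy hh.
have n2' : forall y, goes_to e S x2 y -> ~~ (end_vertex e S y && (y \notin P)).
  by move=> y gy; apply/negP => hh; move: (n2 y); rewrite /= gy hh.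
case g12: (goes_to e S x1 (last x1 P)).
  exact: (SubC1 e_sym e_reg S_can HP HPpath HPdef Ha Hx2 n1' n2' g12 nb).
case g21: (goes_to e S x2 (head x1 P)).
  have n1r : forall y, goes_to e S x1 y -> ~~ (end_vertex e S y && (y \notin rev P)).
    by move=> y; rewrite mem_rev; apply: n1'.
  have n2r : forall y, goes_to e S x2 y -> ~~ (end_vertex e S y && (y \notin rev P)).
    by move=> y; rewrite mem_rev; apply: n2'.
  have g21' : goes_to e S x2 (last x2 (rev P)).
    by rewrite last_rev' (proj1 (hI x2 x1)).
  have nb' : ~~ (goes_to e S x2 (head x2 (rev P)) && goes_to e S x1 (last x2 (rev P))).
    by rewrite head_rev' last_rev' (proj1 (hI x2 x1)) (proj2 (hI x2 x1)) andbC.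
  have := SubC1 e_sym e_reg S_can HPr' HPpathr' HPdefr' Ha' Hx1 n2r n1r g21' nb'.
  lra.
exact: (SubC3 e_sym e_reg S_can HP HPpath HPdef Ha Hb' n1' n2'
  (negbT g12) (negbT g21) nb).
Qed.
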